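(* Let $G$ be a finite simple graph of order $n$ and let $u$ be a vertex of $G$. Then \[\mathrm{dp}_{G^{c}}(u)=\big(\mathrm{dp}(G)-\mathrm{dp}_G(u)-x^{\deg_G u}\big)^{\curlywedge (n-1)-}.\]
   Context: For a vertex $w$ of a simple graph $\Gamma$, the degree polynomial $\mathrm{dp}_\Gamma(w)\in\mathbb{Z}[x]$ is the polynomial in which the coefficient of $x^{i}$ is the number of neighbors of $w$ in $\Gamma$ having degree $i$ in $\Gamma$ ($\mathrm{dp}_\Gamma(w)=0$ if $w$ is isolated). The degree polynomial of the graph $\Gamma$ is $\mathrm{dp}(\Gamma)=\sum_{i\ge0} t_i x^i$, where $t_i$ is the number of vertices of $\Gamma$ of degree $i$ (so $t_0$ counts isolated vertices). For a polynomial $f=\sum_i a_i x^i$ with nonnegative integer coefficients and $\deg f\le m$, $f^{\curlywedge m-}=\sum_i a_i x^{m-i}$ (and $0^{\curlywedge m-}=0$). $G^{c}$ denotes the complement of $G$: same vertex set, with two distinct vertices adjacent in $G^c$ iff they are not adjacent in $G$. *)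

(* Defs.v *)
From mathcomp Require Import all_boot all_order all_algebra.
Set Implicit Arguments. Unset Strict Implicit. Unset Printing Implicit Defensive.
Import GRing.Theory.
Local Open Scope ring_scope.

Definition simple_graph (T : finType) (e : rel T) : Prop :=
  symmetric e /\ irreflexive e.

Definition deg (T : finType) (e : rel T) (w : T) : nat := #|[pred v | e w v]|.

Definition compl_graph (T : finType) (e : rel T) : rel T :=
  fun x y => (x != y) && ~~ e x y.

Definition dpv (T : finType) (e : rel T) (w : T) : {poly int} :=
  \sum_(v | e w v) 'X^(deg e v).

Definition dpG (T : finType) (e : rel T) : {poly int} :=
  \sum_(v : T) 'X^(deg e v).

(* reflection f^{m-} = sum_{i<=m} a_i x^(m-i)  (used only for deg f <= m) *)
Definition refl_poly (m : nat) (f : {poly int}) : {poly int} :=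
  \sum_(i < m.+1) f`_i *: 'X^(m - i).

(* Main.v *)
Require Import Defs.
From mathcomp Require Import all_boot all_order all_algebra.
From mathcomp Require Import zify ring.
Local Open Scope ring_scope.
Import GRing.Theory.
Set Implicit Arguments.

Lemma deg_compl (T : finType) (e : rel T) (v : T) :
  irreflexive e -> deg (compl_graph e) v = (#|T|.-1 - deg e v)%N.
Proof.
move=> irr; rewrite /deg /compl_graph.
have H1 := cardU1 v [pred w | e v w].
rewrite inE irr /= in H1.
have H2 := cardC [predU1 v & [pred w | e v w]].
rewrite H1 in H2.
have -> : #|[pred v0 | (v != v0) && ~~ e v v0]| = #|[predC [predU1 v & [pred w | e v w]]]|.
  apply: eq_card => w; rewrite !inE eq_sym; by case: (w == v); case: (e v w).
by rewrite -H2 /= add0n addnC addnK.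
Qed.

Lemma deg_le (T : finType) (e : rel T) (v : T) :
  irreflexive e -> (deg e v <= #|T|.-1)%N.
Proof.
move=> irr.
have H2 := cardC [predU1 v & [pred w | e v w]].
have H1 := cardU1 v [pred w | e v w].
rewrite inE irr /= in H1. rewrite H1 in H2. rewrite /deg -H2 /= add0n; exact: leq_addr.
Qed.

Lemma refl_sum (T : finType) (P : pred T) (k : T -> nat) (m : nat) :
  (forall v, P v -> k v <= m)%N ->
  refl_poly m (\sum_(v | P v) 'X^(k v)) = \sum_(v | P v) 'X^(m - k v).
Proof.
move=> hk; rewrite /refl_poly.
under eq_bigr => i _ do rewrite coef_sum scaler_suml.
rewrite exchange_big /=; apply: eq_bigr => v Pv.
rewrite (bigD1 (inord (k v))) //= big1 ?addr0.
  by rewrite coefXn inordK ?ltnS ?hk // eqxx scale1r.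
move=> i /negbTE ne; rewrite coefXn.
case: eqP => [Hi|]; last by rewrite scale0r.
move: ne; suff -> : i = inord (k v) by rewrite eqxx.
by apply: val_inj; rewrite /= inordK ?ltnS ?hk // Hi.
Qed.

Theorem theorem4p19 (T : finType) (e : rel T) (u : T) :
  simple_graph e ->
  dpv (compl_graph e) u =
  refl_poly (#|T|.-1) (dpG e - dpv e u - 'X^(deg e u)).
Proof.
move=> [sym irr].
have -> : dpG e - dpv e u - 'X^(deg e u) =
   \sum_(v | compl_graph e u v) 'X^(deg e v).
  rewrite /dpG /dpv (bigID (fun v => e u v)) /= [\sum_(i | ~~ e u i) _](bigD1 u) /=; last by rewrite irr.
  have H : forall a b c : {poly int}, a + (b + c) - a - b = c.
    by move=> a b c; ring.
  rewrite H.
  apply: eq_bigl => v; by rewrite /compl_graph andbC (eq_sym v u).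
rewrite refl_sum; last by move=> v _; exact: deg_le.
rewrite /dpv; apply: eq_bigr => v _; by rewrite (@deg_compl T e v irr).
Qed.
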